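(* Let $A\in\mathbb{R}^{m\times m}$ be positive definite, let $B\in\mathbb{R}^{m\times n}$ ($n\le m$) be rank deficient, and let $\alpha\ge0$, $\beta>0$. Then the pseudo-spectral radius of the MGSSP iteration matrix satisfies $\gamma(\mathcal{T}(\alpha,\beta))<1$.
   Context: A real square matrix $A$ is called positive definite if $x^TAx>0$ for all nonzero $x\in\mathbb{R}^m$ ($A$ need not be symmetric). For $\alpha\ge0,\beta>0$ define $\mathcal{P}_{MGSSP}=\begin{pmatrix}\alpha I+2A & 2B\\ -2B^T & \beta I\end{pmatrix}$, $\mathcal{Q}_{MGSSP}=\begin{pmatrix}\alpha I+A & B\\ -B^T & \beta I\end{pmatrix}$, and the MGSSP iteration matrix $\mathcal{T}(\alpha,\beta)=\mathcal{P}_{MGSSP}^{-1}\mathcal{Q}_{MGSSP}$. For a square matrix $T$ with spectrum $\sigma(T)$, the pseudo-spectral radius is $\gamma(T)=\max\{|\lambda|:\lambda\in\sigma(T),\ \lambda\neq1\}$ (taken as $0$ if $\sigma(T)=\{1\}$). *)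

(* Defs.v *)
From HB Require Import structures.
From mathcomp Require Import all_boot all_order all_algebra.
Set Implicit Arguments. Unset Strict Implicit. Unset Printing Implicit Defensive.
Import Order.TTheory GRing.Theory Num.Theory.
Local Open Scope ring_scope.

(* C plays the role of the complex numbers; "real" matrices/vectors are those
   whose entries are real (in Num.real). *)
Definition real_mx (C : numClosedFieldType) (p q : nat) (M : 'M[C]_(p, q)) : Prop :=
  forall i j, M i j \is Num.real.

(* A real square matrix A is positive definite: x^T A x > 0 for all real x <> 0
   (A need not be symmetric). *)
Definition pos_def (C : numClosedFieldType) (m : nat) (A : 'M[C]_m) : Prop :=
  real_mx A /\
  forall x : 'cV[C]_m, real_mx x -> x != 0 -> 0 < (x^T *m A *m x) 0 0.

Definition P_MGSSP (C : numClosedFieldType) (m n : nat)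
  (A : 'M[C]_m) (B : 'M[C]_(m, n)) (alpha beta : C) : 'M[C]_(m + n) :=
  block_mx (alpha%:M + 2%:R *: A) (2%:R *: B) (- (2%:R *: B^T)) beta%:M.

Definition Q_MGSSP (C : numClosedFieldType) (m n : nat)
  (A : 'M[C]_m) (B : 'M[C]_(m, n)) (alpha beta : C) : 'M[C]_(m + n) :=
  block_mx (alpha%:M + A) B (- B^T) beta%:M.

Definition T_MGSSP (C : numClosedFieldType) (m n : nat)
  (A : 'M[C]_m) (B : 'M[C]_(m, n)) (alpha beta : C) : 'M[C]_(m + n) :=
  invmx (P_MGSSP A B alpha beta) *m Q_MGSSP A B alpha beta.

(* gamma(T) < r, where gamma(T) = max{ |lambda| : lambda in sigma(T), lambda <> 1 }
   (0 if sigma(T) = {1}); for r > 0 this is exactly: every eigenvalue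
   lambda <> 1 of T has |lambda| < r. *)
Definition pseudo_spectral_radius_lt (C : numClosedFieldType) (p : nat)
  (T : 'M[C]_p) (r : C) : Prop :=
  forall lambda : C, eigenvalue T lambda -> lambda != 1 -> `|lambda| < r.

(* Main.v *)
Require Import Defs.
From HB Require Import structures.
From mathcomp Require Import all_boot all_order all_algebra ring.
Import Order.TTheory GRing.Theory Num.Theory.
Local Open Scope ring_scope.

Section S.
Variable C : numClosedFieldType.

Lemma rect0 (X Y : C) : X \is Num.real -> Y \is Num.real -> X + 'i * Y = 0 -> X = 0 /\ Y = 0.
Proof.
move=> hX hY e; split.
  have r0 : (0 : C) \is Num.real by rewrite real0.
  have := Re_rect r0 r0.
  by rewrite mulr0 addr0 -{1}e Re_rect.
have r0 : (0 : C) \is Num.real by rewrite real0.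
have := Im_rect r0 r0.
by rewrite mulr0 addr0 -{1}e Im_rect.
Qed.

Lemma key (K b a1 a2 r s : C) : 0 <= K -> 0 <= b -> 0 < a1 ->
  a2 \is Num.real -> r \is Num.real -> s \is Num.real ->
  K + (r + 'i * s) * (a1 + 'i * a2) + (r + 'i * s) ^+ 2 * b = 0 -> r <= 0.
Proof.
move=> K0 b0 a10 ra2 rr rs e.
have rK := ger0_real K0; have rb := ger0_real b0; have ra1 := gtr0_real a10.
set X := K + r * a1 - s * a2 + (r ^+ 2 - s ^+ 2) * b.
set Y := r * a2 + s * a1 + 2%:R * r * s * b.
have eXY : K + (r + 'i * s) * (a1 + 'i * a2) + (r + 'i * s) ^+ 2 * b
   = X + 'i * Y + ('i ^+ 2 + 1) * (s * s * b + s * a2).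
  rewrite /X /Y; ring.
rewrite eXY sqrCi addNr mul0r addr0 in e.
have [X0 Y0] : X = 0 /\ Y = 0.
  by apply: rect0 => //; rewrite /X /Y ?rpredD ?rpredN ?rpredM ?rpredB ?rpredX ?rpred_nat.
have e2 : K * r + (r ^+ 2 + s ^+ 2) * (a1 + r * b) = 0.
  have -> : K * r + (r ^+ 2 + s ^+ 2) * (a1 + r * b) = r * X + s * Y by rewrite /X /Y; ring.
  by rewrite X0 Y0 !mulr0 addr0.
rewrite real_leNgt ?rpred0 //; apply/negP => r0.
have : 0 < K * r + (r ^+ 2 + s ^+ 2) * (a1 + r * b).
  apply: ltr_wpDl; first exact: mulr_ge0 (ltW r0).
  apply: mulr_gt0; last by apply: ltr_wpDr => //; exact: mulr_ge0 (ltW r0) b0.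
  by apply: ltr_wpDr; [rewrite -realEsqr | rewrite exprn_gt0].
by rewrite e2 ltxx.
Qed.

Lemma final (l r s : C) : r \is Num.real -> s \is Num.real -> r <= 0 ->
  l * (2%:R - (r + 'i * s)) = 1 - (r + 'i * s) -> `|l| < 1.
Proof.
move=> rr rs r0 e.
have e1 : 2%:R - (r + 'i * s) = (2%:R - r) + 'i * (- s) by ring.
have e2 : 1 - (r + 'i * s) = (1 - r) + 'i * (- s) by ring.
rewrite e1 e2 in e.
have := congr1 (fun z => `|z| ^+ 2) e => /=.
rewrite normrM exprMn !normC2_rect ?rpredB ?rpredN ?rpred_nat ?rpred1 //.
move=> e3.
rewrite real_ltNge ?normr_real ?rpred1 //; apply/negP => l1.
have l2 : 1 <= `|l| ^+ 2 by rewrite -(expr1n C 2) lerXn2r ?nnegrE // ?normr_ge0.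
have : 1 * ((2%:R - r) ^+ 2 + (- s) ^+ 2) <= (1 - r) ^+ 2 + (- s) ^+ 2.
  rewrite -e3; apply: ler_wpM2r => //; apply: addr_ge0; rewrite -realEsqr ?rpredB ?rpredN ?rpred_nat //.
rewrite mul1r lerD2r.
have -> : (2%:R - r) ^+ 2 = (1 - r) ^+ 2 + (3%:R - 2%:R * r) by ring.
rewrite gerDl real_leNgt ?rpredB ?rpredM ?rpred_nat ?rpred0 //.
apply/negP/negPn.
have : 0 <= - (2%:R * r) by rewrite oppr_ge0 mulr_ge0_le0 ?ler0n.
move=> h; rewrite addrC; apply: ltr_wpDl => //; by rewrite ltr0n.
Qed.
End S.

Lemma z00 (R : pzRingType) p q i j : (0 : 'M[R]_(p, q)) i j = 0.
Proof. by rewrite mxE. Qed.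
Lemma s00 (R : pzRingType) p q i j k (M : 'M[R]_(p, q)) : (k *: M) i j = k * M i j.
Proof. by rewrite mxE. Qed.

Section M.
Variable C : numClosedFieldType.
Set Implicit Arguments. Unset Strict Implicit.
Local Notation cj M := (map_mx Num.conj M).

Lemma real_mxM p q r (M : 'M[C]_(p, q)) (N : 'M[C]_(q, r)) :
  real_mx M -> real_mx N -> real_mx (M *m N).
Proof.
move=> hM hN i j; rewrite mxE rpred_sum // => k _; exact: rpredM.
Qed.

Lemma real_mxT p q (M : 'M[C]_(p, q)) : real_mx M -> real_mx M^T.
Proof. by move=> hM i j; rewrite mxE. Qed.

Lemma cj_real p q (M : 'M[C]_(p, q)) : real_mx M -> cj M = M.
Proof. by move=> hM; apply/matrixP => i j; rewrite mxE conj_Creal. Qed.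

Lemma cjM p q r (M : 'M[C]_(p, q)) (N : 'M[C]_(q, r)) : cj (M *m N) = cj M *m cj N.
Proof. exact: map_mxM. Qed.

Lemma dot_ge0 k (u : 'rV[C]_k) : 0 <= (u *m (cj u)^T) 0 0.
Proof.
rewrite mxE; apply: sumr_ge0 => j _; rewrite !mxE; exact: mul_conjC_ge0.
Qed.

Definition F {m} (A : 'M[C]_m) (u v : 'rV[C]_m) := (u *m A *m v^T) 0 0.

Lemma FDl m (A : 'M[C]_m) u1 u2 v : F A (u1 + u2) v = F A u1 v + F A u2 v.
Proof. by rewrite /F !mulmxDl mxE. Qed.
Lemma FZl m (A : 'M[C]_m) k u v : F A (k *: u) v = k * F A u v.
Proof. by rewrite /F -!scalemxAl mxE. Qed.
Lemma FDr m (A : 'M[C]_m) u v1 v2 : F A u (v1 + v2) = F A u v1 + F A u v2.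
Proof. by rewrite /F linearD /= mulmxDr mxE. Qed.
Lemma FZr m (A : 'M[C]_m) k u v : F A u (k *: v) = k * F A u v.
Proof. by rewrite /F linearZ /= -scalemxAr mxE. Qed.

Lemma F_real m (A : 'M[C]_m) u v : real_mx A -> real_mx u -> real_mx v -> F A u v \is Num.real.
Proof.
move=> hA hu hv; apply: real_mxM; [apply: real_mxM => // | exact: real_mxT].
Qed.

Lemma F_ge0 m (A : 'M[C]_m) u : pos_def A -> real_mx u -> 0 <= F A u u.
Proof.
move=> [hA pA] hu; have [->|u0] := eqVneq u 0.
  by rewrite /F !mul0mx mxE.
apply: ltW; have := pA u^T (real_mxT hu); rewrite trmxK.
by apply; rewrite -(inj_eq (@trmx_inj _ _ _)) trmxK linear0.
Qed.

Lemma F_gt0 m (A : 'M[C]_m) u : pos_def A -> real_mx u -> u != 0 -> 0 < F A u u.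
Proof.
move=> [hA pA] hu u0; have := pA u^T (real_mxT hu); rewrite trmxK.
by apply; rewrite -(inj_eq (@trmx_inj _ _ _)) trmxK linear0.
Qed.

Lemma re_pos m (A : 'M[C]_m) (x : 'rV[C]_m) : pos_def A -> x != 0 ->
  0 < 'Re ((x *m A *m (cj x)^T) 0 0).
Proof.
move=> pdA x0; have rA := pdA.1.
set p := map_mx (fun z => 'Re z) x; set q := map_mx (fun z => 'Im z) x.
have rp : real_mx p by move=> i j; rewrite mxE Creal_Re.
have rq : real_mx q by move=> i j; rewrite mxE Creal_Im.
have ex : x = p + 'i *: q by apply/matrixP => i j; rewrite !mxE -Crect.
have ecx : cj x = p + (- 'i) *: q.
  by apply/matrixP => i j; rewrite !mxE {1}[x i j]Crect conjC_rect ?Creal_Re ?Creal_Im // mulNr.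
have -> : (x *m A *m (cj x)^T) 0 0 = F A x (cj x) by [].
rewrite ecx {1}ex !(FDl, FDr, FZl, FZr).
have -> : F A p p + - 'i * F A p q + 'i * (F A q p + - 'i * F A q q) =
  (F A p p + F A q q) + 'i * (F A q p - F A p q) - ('i ^+ 2 + 1) * F A q q by ring.
rewrite sqrCi addNr mul0r subr0 Re_rect ?rpredD ?rpredB ?rpredN ?F_real //.
have [p0|p0] := eqVneq p 0.
  have q0 : q != 0 by apply: contraNneq x0 => q0; rewrite ex p0 q0 scaler0 addr0.
  by apply: ltr_wpDl; [apply: F_ge0 | apply: F_gt0].
by apply: ltr_wpDr; [apply: F_ge0 | apply: F_gt0].
Qed.
Lemma eq1 m n (A : 'M[C]_m) (B : 'M[C]_(m, n)) (x : 'rV[C]_m) (y : 'rV[C]_n) alpha k :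
  real_mx B ->
  ((x *m (alpha%:M + k *: A) + y *m - (k *: B^T)) *m (cj x)^T) 0 0
  = alpha * (x *m (cj x)^T) 0 0 + k * (x *m A *m (cj x)^T) 0 0
    - k * (y *m (cj (x *m B))^T) 0 0.
Proof.
move=> rB.
have hB : B^T *m (cj x)^T = (cj (x *m B))^T by rewrite cjM (cj_real rB) trmx_mul.
rewrite mulmxDr mul_mx_scalar -scalemxAr mulmxN -scalemxAr !mulmxDl mulNmx.
by rewrite -!scalemxAl -[y *m B^T *m _]mulmxA hB !mxE.
Qed.

Lemma eq2 m n (B : 'M[C]_(m, n)) (x : 'rV[C]_m) (y : 'rV[C]_n) beta k :
  ((x *m (k *: B) + y *m beta%:M) *m (cj (x *m B))^T) 0 0
  = k * (x *m B *m (cj (x *m B))^T) 0 0 + beta * (y *m (cj (x *m B))^T) 0 0.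
Proof.
by rewrite mul_mx_scalar -scalemxAr !mulmxDl -!scalemxAl !mxE.
Qed.
End M.

Lemma comb2 (C : numClosedFieldType) (X Z1 W1 Z2 W2 k1 k2 : C) :
  Z1 = W1 -> Z2 = W2 -> X = k1 * (Z1 - W1) + k2 * (Z2 - W2) -> X = 0.
Proof. by move=> -> ->; rewrite !subrr !mulr0 addr0. Qed.

Theorem lemma4p3 (C : numClosedFieldType) (m n : nat)
  (A : 'M[C]_m) (B : 'M[C]_(m, n)) (alpha beta : C) :
  pos_def A ->
  real_mx B ->
  (n <= m)%N ->
  (\rank B < n)%N ->
  alpha \is Num.real -> 0 <= alpha ->
  beta \is Num.real -> 0 < beta ->
  pseudo_spectral_radius_lt (T_MGSSP A B alpha beta) 1.
Proof.
move=> pdA rB _ _ ra a0 rb b0 l /eigenvalueP [v hv v0] l1.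
have bn0 : beta != 0 by rewrite gt_eqF.
set P := P_MGSSP A B alpha beta; set Q := Q_MGSSP A B alpha beta.
have uP : P \in unitmx.
  rewrite unitmxE unitfE; apply/negP => /det0P [z z0 hz].
  rewrite -(hsubmxK z) /P /P_MGSSP mul_row_block -row_mx0 in hz.
  move/eq_row_mx: hz => [E1 E2].
  move: z0; rewrite -(hsubmxK z) => z0; set x := lsubmx z in E1 E2 z0 *; set y := rsubmx z in E1 E2 z0 *.
  have [x0|x0] := eqVneq x 0.
    rewrite x0 !mul0mx add0r mul_mx_scalar in E2.
    move/eqP: E2; rewrite scaler_eq0 (negbTE bn0) /= => /eqP y0.
    by move: z0; rewrite x0 y0 row_mx0 eqxx.
  have S1 := congr1 (fun M => (M *m (map_mx Num.conj x)^T) 0 0) E1.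
  rewrite /= eq1 // mul0mx z00 in S1.
  have S2 := congr1 (fun M => (M *m (map_mx Num.conj (x *m B))^T) 0 0) E2.
  rewrite /= eq2 mul0mx z00 in S2.
  set c := (x *m (map_mx Num.conj x)^T) 0 0 in S1.
  set a := (x *m A *m (map_mx Num.conj x)^T) 0 0 in S1.
  set e := (y *m (map_mx Num.conj (x *m B))^T) 0 0 in S1 S2.
  set bb := (x *m B *m (map_mx Num.conj (x *m B))^T) 0 0 in S2.
  have : (2%:R : C) <= 0.
    apply: (@key C (alpha * c) (bb / beta) ('Re a) ('Im a) 2%:R 0); last first.
    rewrite mulr0 addr0 -Crect.
    apply: (comb2 S1 S2 (k1 := 1) (k2 := 2%:R / beta)); field.
    done.
    - by rewrite rpred0.
    - by rewrite rpred_nat.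
    - exact: Creal_Im.
    - exact: re_pos.
    - by apply: divr_ge0; [apply: dot_ge0 | apply: ltW].
    - by apply: mulr_ge0 => //; apply: dot_ge0.
  by move=> h; have := lt_le_trans (ltr0Sn C 1) h; rewrite ltxx.
have hw : (v *m invmx P) *m Q = l *: ((v *m invmx P) *m P).
  by rewrite mulmxKV // -mulmxA -hv.
have w0 : v *m invmx P != 0.
  by apply: contraNneq v0 => w0; rewrite -(mulmxKV uP v) w0 mul0mx.
move: hw w0; set w := v *m invmx P => hw w0.
rewrite -(hsubmxK w) /Q /P /Q_MGSSP /P_MGSSP !mul_row_block scale_row_mx in hw.
move/eq_row_mx: hw => [E1 E2].
move: w0; rewrite -(hsubmxK w) => w0; set x := lsubmx w in E1 E2 w0 *; set y := rsubmx w in E1 E2 w0 *.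
have [x0|x0] := eqVneq x 0.
  rewrite x0 !mul0mx !add0r mul_mx_scalar in E2.
  have : ((1 - l) * beta) *: y = 0 by rewrite -scalerA scalerBl scale1r -E2 subrr.
  move/eqP; rewrite scaler_eq0 mulf_eq0 (negbTE bn0) subr_eq0 eq_sym (negbTE l1) /= => /eqP y0.
  by move: w0; rewrite x0 y0 row_mx0 eqxx.
have eA : alpha%:M + A = alpha%:M + 1 *: A by rewrite scale1r.
have eB : - B^T = - (1 *: B^T) by rewrite scale1r.
rewrite [alpha%:M + A]eA [- B^T]eB in E1.
have S1 := congr1 (fun M => (M *m (map_mx Num.conj x)^T) 0 0) E1.
rewrite /= -scalemxAl s00 !eq1 // in S1.
have eB2 : x *m B + y *m beta%:M = x *m (1 *: B) + y *m beta%:M by rewrite scale1r.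
rewrite [x *m B + _]eB2 in E2.
have S2 := congr1 (fun M => (M *m (map_mx Num.conj (x *m B))^T) 0 0) E2.
rewrite /= -scalemxAl s00 !eq2 in S2.
set c := (x *m (map_mx Num.conj x)^T) 0 0 in S1.
set a := (x *m A *m (map_mx Num.conj x)^T) 0 0 in S1.
set e := (y *m (map_mx Num.conj (x *m B))^T) 0 0 in S1 S2.
set bb := (x *m B *m (map_mx Num.conj (x *m B))^T) 0 0 in S2.
have ln1 : 1 - l != 0 by rewrite subr_eq0 eq_sym.
set t := (1 - 2%:R * l) / (1 - l).
have rt : 'Re t <= 0.
  apply: (@key C (alpha * c) (bb / beta) ('Re a) ('Im a) ('Re t) ('Im t)).
  - by apply: mulr_ge0 => //; apply: dot_ge0.
  - by apply: divr_ge0; [apply: dot_ge0 | apply: ltW].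
  - exact: re_pos.
  - exact: Creal_Im.
  - exact: Creal_Re.
  - exact: Creal_Im.
  rewrite -!Crect.
  apply: (comb2 S1 S2 (k1 := 1 / (1 - l)) (k2 := t / (beta * (1 - l)))).
  rewrite /t; field.
  by rewrite ln1 bn0.
apply: (@final C l ('Re t) ('Im t) (Creal_Re t) (Creal_Im t) rt).
rewrite -Crect /t; field.
done.
Qed.
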